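(* Let $G$ be a finite group and let $H \le G$ be a subgroup with $H \neq \{e\}$. Let $C_1, \ldots, C_k$ denote the non-identity conjugacy classes of $G$. Then \[ \sum_{i=1}^k \frac{|C_i \cap H|^2}{|H|\,|C_i|} \;<\; D_H \;\le\; \sum_{i=1}^k |C_i \cap H|\,|C_i|^{-1/2}. \]
   Context: For a finite group $G$, let $\mathrm{Irr}(G)$ be the set of complex irreducible characters of $G$, and for $\chi \in \mathrm{Irr}(G)$ let $d_\chi = \chi(e)$ be its degree. For a subgroup $H \le G$ define the probability distribution $P_H$ on $\mathrm{Irr}(G)$ by $P_H(\chi) = \frac{d_\chi}{|G|}\sum_{h \in H}\chi(h)$ (the distribution obtained by weak quantum Fourier sampling), and define the total variation ($L_1$) distance \[ D_H = \sum_{\chi \in \mathrm{Irr}(G)} |P_H(\chi) - P_{\{e\}}(\chi)| = \frac{1}{|G|}\sum_{\chi \in \mathrm{Irr}(G)} d_\chi \Big|\sum_{h \in H,\, h \neq e} \chi(h)\Big|. \] *)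

(* Defs.v *)
From HB Require Import structures.
From mathcomp Require Import all_boot all_order all_algebra all_fingroup all_field all_character.
Set Implicit Arguments. Unset Strict Implicit. Unset Printing Implicit Defensive.
Import Order.TTheory GRing.Theory Num.Theory.
Local Open Scope ring_scope.

Definition PH (gT : finGroupType) (G H : {group gT}) (i : Iirr G) : algC :=
  ('chi[G]_i 1%g / #|G|%:R) * \sum_(h in H) 'chi[G]_i h.

Definition DH (gT : finGroupType) (G H : {group gT}) : algC :=
  \sum_(i : Iirr G) `| PH H i - PH 1%G i |.

(* Main.v *)
Require Import Defs.
From HB Require Import structures.
From mathcomp Require Import all_boot all_order all_algebra all_fingroup all_field all_character.
From mathcomp Require Import ring.
Import Order.TTheory GRing.Theory Num.Theory.
Local Open Scope ring_scope.

Lemma sum_classes (gT : finGroupType) (G H : {group gT}) (Phi : {set gT} -> algC) :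
  H \subset G ->
  \sum_(h in (H^#)%g) Phi (h ^: G)%g
  = \sum_(C in classes G | C != 1%g) #|C :&: H|%:R * Phi C.
Proof.
move=> sHG.
rewrite (partition_big (fun h => h ^: G)%g
          (fun C => (C \in classes G) && (C != 1%g))) /=; last first.
  move=> h /setD1P[h1 hH]; rewrite mem_classes ?(subsetP sHG) //=.
  apply: contra h1 => /eqP hG.
  by have := class_refl G h; rewrite hG => /set1P ->.
apply: eq_bigr => C /andP[/imsetP[x xG ->] C1].
rewrite mulr_natl -sumr_const; apply: eq_big => h.
  rewrite !inE; apply/andP/andP => [[/andP[h1 hH] /eqP/class_eqP hx] | [hx hH]].
    by split.
  split; last by apply/eqP/class_eqP.
  rewrite hH andbT; apply: contraNneq C1 => h1.
  by move: hx; rewrite h1 => /class_eqP <-; rewrite class1G.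
by move=> /andP[_ /eqP ->].
Qed.

Lemma card_cent_class (gT : finGroupType) (G : {group gT}) (h : gT) :
  #|G|%:R = #|('C_G[h])%g|%:R * #|(h ^: G)%g|%:R :> algC.
Proof. by rewrite -natrM -index_cent1 Lagrange // subsetIl. Qed.

Lemma per_h (gT : finGroupType) (G : {group gT}) (h : gT) : h \in G ->
  \sum_i 'chi[G]_i 1%g * `|'chi_i h| <= #|G|%:R / sqrtC #|(h ^: G)%g|%:R.
Proof.
move=> hG.
set s := sqrtC _.
have cpos : (0 < #|(h ^: G)%g|)%N by apply/card_gt0P; exists h; exact: class_refl.
have spos : 0 < s by rewrite sqrtC_gt0 ltr0n.
have s0 : s != 0 by rewrite gt_eqF.
have key i : 'chi[G]_i 1%g * `|'chi_i h| *+ 2 <=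
     'chi_i 1%g ^+ 2 / s + s * `|'chi_i h| ^+ 2.
  rewrite -subr_ge0.
  have -> : 'chi[G]_i 1%g ^+ 2 / s + s * `|'chi_i h| ^+ 2
              - 'chi[G]_i 1%g * `|'chi_i h| *+ 2
            = ('chi[G]_i 1%g - s * `|'chi_i h|) ^+ 2 / s.
    by field.
  apply: divr_ge0; last exact: ltW.
  rewrite -realEsqr rpredB // ger0_real //; first exact: ltW (irr1_gt0 i).
  by rewrite mulr_ge0 // ltW.
have : (\sum_i 'chi[G]_i 1%g * `|'chi_i h|) *+ 2 <=
       \sum_i ('chi[G]_i 1%g ^+ 2 / s + s * `|'chi_i h| ^+ 2).
  by rewrite -sumrMnl; apply: ler_sum => i _; exact: key.
rewrite big_split /= -mulr_suml -mulr_sumr irr_sum_square.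
rewrite [X in s * X](eq_bigr (fun i => 'chi[G]_i h * ('chi_i h)^*)); last by move=> i _; rewrite normCK.
rewrite (second_orthogonality_relation h hG) class_refl mulr1n.
have -> : #|G|%:R / s + s * #|('C_G[h])%g|%:R = (#|G|%:R / s) *+ 2.
  rewrite (@card_cent_class _ G h) -(sqrtCK #|(h ^: G)%g|%:R) -/s; field; done.
by rewrite lerMn2r.
Qed.

Theorem theorem1 (gT : finGroupType) (G H : {group gT}) :
  H \subset G -> H :!=: 1%g ->
  \sum_(C in classes G | C != 1%g) (#|C :&: H|%:R ^+ 2 / (#|H|%:R * #|C|%:R))
    < DH G H
  /\ DH G H <= \sum_(C in classes G | C != 1%g) (#|C :&: H|%:R / sqrtC #|C|%:R) :> algC.
Proof.
move=> sHG ntH.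
set d := fun i : Iirr G => 'chi[G]_i 1%g.
set a := fun i : Iirr G => \sum_(h in (H^#)%g) 'chi[G]_i h.
have H1 : (1 \in H)%g := group1 H.
have gG : (0 < #|G|%:R :> algC) by rewrite ltr0n cardG_gt0.
have gH : (0 < #|H|%:R :> algC) by rewrite ltr0n cardG_gt0.
have d0 i : 0 <= d i by exact: ltW (irr1_gt0 i).
have PHd i : PH H i - PH 1%G i = d i / #|G|%:R * a i.
  rewrite /PH (big_setD1 1%g H1) /= big_set1 /d /a; ring.
have DHe : DH G H = #|G|%:R^-1 * \sum_i d i * `|a i|.
  rewrite /DH mulr_sumr; apply: eq_bigr => i _.
  rewrite PHd normrM ger0_norm ?divr_ge0 ?ler0n //; ring.
have cH : #|(H^#)%g|%:R = #|H|%:R - 1 :> algC.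
  by rewrite (cardsD1 1%g H) H1 /= natrD addrAC subrr add0r.
have norm_a i : `|a i| <= (#|H|%:R - 1) * d i.
  apply: le_trans (ler_norm_sum _ _ _) _.
  rewrite -cH mulr_natl -sumr_const; apply: ler_sum => h _.
  exact: char1_ge_norm (irr_char i).
split.
  have -> : \sum_(C in classes G | C != 1%g) (#|C :&: H|%:R ^+ 2 / (#|H|%:R * #|C|%:R))
     = \sum_(h in (H^#)%g) #|(h ^: G)%g :&: H|%:R / (#|H|%:R * #|(h ^: G)%g|%:R) :> algC.
    rewrite (eq_bigr (fun C => #|C :&: H|%:R * (#|C :&: H|%:R / (#|H|%:R * #|C|%:R)))); last first.
      by move=> C _; rewrite expr2 mulrA.
    exact: esym (@sum_classes _ G H (fun C => #|C :&: H|%:R / (#|H|%:R * #|C|%:R)) sHG).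
  have sq_a : \sum_i `|a i| ^+ 2
      = \sum_(h in (H^#)%g) #|('C_G[h])%g|%:R * #|(h ^: G)%g :&: H|%:R.
    transitivity (\sum_i \sum_(h in (H^#)%g) \sum_(h' in (H^#)%g)
                    'chi[G]_i h * ('chi_i h')^*).
      apply: eq_bigr => i _; rewrite normCK /a rmorph_sum mulr_suml.
      by apply: eq_bigr => h _; rewrite mulr_sumr.
    rewrite exchange_big; apply: eq_bigr => h /setD1P[h1 hH] /=; rewrite exchange_big /=.
    rewrite (eq_bigr (fun h' => #|('C_G[h])%g|%:R *+ (h' \in (h ^: G)%g))); last first.
      move=> h' /setD1P[_ h'H].
      by rewrite second_orthogonality_relation ?(subsetP sHG) // class_sym.
    under eq_bigr do rewrite mulrb.
    rewrite -big_mkcondr /= sumr_const mulr_natr; congr (_ *+ _).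
    apply: eq_card => x; rewrite -topredE /= !inE.
    case xh: (x \in (h ^: G)%g); rewrite ?andbF ?andbT //=.
    have -> // : x != 1%g.
    apply: contra h1 => /eqP x1; move: xh; rewrite x1 class_sym class1G.
    by rewrite inE.
  have -> : \sum_(h in (H^#)%g) #|(h ^: G)%g :&: H|%:R / (#|H|%:R * #|(h ^: G)%g|%:R)
      = (#|G|%:R * #|H|%:R)^-1 * \sum_i `|a i| ^+ 2 :> algC.
    rewrite sq_a mulr_sumr; apply: eq_bigr => h /setD1P[_ hH].
    have cpos : (0 < #|(h ^: G)%g|)%N by apply/card_gt0P; exists h; exact: class_refl.
    have cc : (0 < #|('C_G[h])%g|)%N by exact: cardG_gt0.
    rewrite (@card_cent_class _ G h); field.
    by rewrite !pnatr_eq0 -!lt0n cc cpos cardG_gt0.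
  set S := \sum_i d i * `|a i|.
  have Spos : 0 < S.
    rewrite /S (bigD1 0) //=; apply: ltr_wpDr.
      by apply: sumr_ge0 => i _; rewrite mulr_ge0.
    have -> : a 0 = #|(H^#)%g|%:R.
      rewrite /a -sumr_const; apply: eq_bigr => h /setD1P[_ hH].
      by rewrite irr0 cfun1E (subsetP sHG h hH).
    rewrite /d irr0 cfun1E group1 mul1r ger0_norm ?ler0n // cH subr_gt0.
    by rewrite ltr1n cardG_gt1.
  have X : \sum_i `|a i| ^+ 2 <= (#|H|%:R - 1) * S.
    rewrite /S mulr_sumr; apply: ler_sum => i _; rewrite expr2 mulrA.
    by apply: ler_wpM2r; [exact: normr_ge0 | exact: norm_a].
  rewrite DHe.
  apply: le_lt_trans (_ : _ <= (#|G|%:R * #|H|%:R)^-1 * ((#|H|%:R - 1) * S)) _.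
    by apply: ler_wpM2l X; rewrite invr_ge0 mulr_ge0 ?ler0n.
  rewrite -subr_gt0.
  have -> : #|G|%:R^-1 * S - (#|G|%:R * #|H|%:R)^-1 * ((#|H|%:R - 1) * S)
          = (#|G|%:R * #|H|%:R)^-1 * S.
    by field; rewrite !pnatr_eq0 -!lt0n !cardG_gt0.
  by rewrite mulr_gt0 // invr_gt0 mulr_gt0.
rewrite DHe.
have -> : \sum_(C in classes G | C != 1%g) (#|C :&: H|%:R / sqrtC #|C|%:R)
   = \sum_(h in (H^#)%g) (sqrtC #|(h ^: G)%g|%:R)^-1 :> algC.
  exact: esym (@sum_classes _ G H (fun C => (sqrtC #|C|%:R)^-1) sHG).
have -> : \sum_(h in (H^#)%g) (sqrtC #|(h ^: G)%g|%:R)^-1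
   = \sum_(h in (H^#)%g) #|G|%:R^-1 * (#|G|%:R / sqrtC #|(h ^: G)%g|%:R) :> algC.
  apply: eq_bigr => h _; rewrite mulrA mulVf ?mul1r // gt_eqF //.
rewrite -mulr_sumr; apply: ler_wpM2l; first by rewrite invr_ge0 ltW.
apply: le_trans (_ : \sum_i \sum_(h in (H^#)%g) d i * `|'chi[G]_i h| <= _).
  apply: ler_sum => i _; rewrite -mulr_sumr; apply: ler_wpM2l => //.
  exact: ler_norm_sum.
rewrite exchange_big /=; apply: ler_sum => h /setD1P[_ hH].
exact: per_h (subsetP sHG h hH).
Qed.
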